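(* Let $K$ be a commutative ring with $1$, let $A$ be a $K$-algebra (associative, not necessarily commutative or with $1$), and let $B$ be a $K$-subalgebra of $A$ such that $A/B$ is a finitely presented $K$-module. Then $A$ is finitely generated as a $K$-algebra if and only if $B$ is finitely generated as a $K$-algebra.
   Context: A $K$-algebra is a structure that is simultaneously an associative ring (not necessarily with identity) and a $K$-module, with $K$-bilinear multiplication. It is finitely generated as a $K$-algebra if there is a finite subset $U$ such that the smallest $K$-subalgebra containing $U$ is the whole algebra. *)

(* Defs.v *)
From HB Require Import structures.
From mathcomp Require Import all_boot all_order all_algebra.
Set Implicit Arguments. Unset Strict Implicit. Unset Printing Implicit Defensive.
Import GRing.Theory.
Local Open Scope ring_scope.

Section Defs.
Variables (K : comPzRingType) (A : lmodType K).

Definition is_Kalgebra (mul : A -> A -> A) : Prop :=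
  [/\ (forall x y z, mul x (mul y z) = mul (mul x y) z),
      (forall x y z, mul (x + y) z = mul x z + mul y z),
      (forall x y z, mul x (y + z) = mul x y + mul x z),
      (forall k x y, mul (k *: x) y = k *: mul x y) &
      (forall k x y, mul x (k *: y) = k *: mul x y)].

Definition is_subalg (mul : A -> A -> A) (S : A -> Prop) : Prop :=
  [/\ S 0,
      (forall x y, S x -> S y -> S (x + y)),
      (forall (k : K) x, S x -> S (k *: x)) &
      (forall x y, S x -> S y -> S (mul x y))].

Definition gen_subalg (mul : A -> A -> A) (U : seq A) : A -> Prop :=
  fun x => forall S, is_subalg mul S -> (forall u, u \in U -> S u) -> S x.

Definition fg_subalg (mul : A -> A -> A) (S : A -> Prop) : Prop :=
  exists U : seq A, (forall u, u \in U -> S u) /\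
    (forall x, gen_subalg mul U x <-> S x).

Definition fg_alg (mul : A -> A -> A) : Prop := fg_subalg mul (fun _ => True).

(* The quotient K-module A/B (B a submodule) is finitely presented:
   there is a surjection K^n -> A/B, e_i |-> a_i + B, whose kernel
   { c | sum_i c_i a_i \in B } is a finitely generated K-submodule of K^n
   (generated by the relation vectors r_1, ..., r_m). *)
Definition quot_fin_pres (B : A -> Prop) : Prop :=
  exists (n : nat) (a : 'I_n -> A),
    (forall x : A, exists c : 'I_n -> K, B (x - \sum_(i < n) c i *: a i)) /\
    exists (m : nat) (r : 'I_m -> 'I_n -> K),
      (forall j, B (\sum_(i < n) r j i *: a i)) /\
      (forall c : 'I_n -> K, B (\sum_(i < n) c i *: a i) ->
         exists d : 'I_m -> K, forall i, c i = \sum_(j < m) d j * r j i).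
End Defs.

(* Main.v *)
Require Import Defs.
From mathcomp Require Import all_boot all_order all_algebra.
From Stdlib Require Import ClassicalEpsilon.
Set Implicit Arguments. Unset Strict Implicit. Unset Printing Implicit Defensive.
Import GRing.Theory.
Local Open Scope ring_scope.

Section Help.
Variables (K : comPzRingType) (A : lmodType K) (mul : A -> A -> A).
Hypothesis Halg : is_Kalgebra mul.

Definition submod (P : A -> Prop) :=
  [/\ P 0, (forall x y, P x -> P y -> P (x + y)) & (forall (k : K) x, P x -> P (k *: x))].

Lemma submod_sub P : submod P -> forall x y, P x -> P y -> P (x - y).
Proof. by case=> _ HD HZ x y Px Py; apply: HD => //; rewrite -scaleN1r; apply: HZ. Qed.

Lemma submod_sum P n (k : 'I_n -> K) (f : 'I_n -> A) :
  submod P -> (forall i, P (f i)) -> P (\sum_(i < n) k i *: f i).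
Proof.
case=> H0 HD HZ Hf.
elim/big_ind: _ => //.
move=> i _; exact: HZ.
Qed.

Lemma subalg_submod P : is_subalg mul P -> submod P.
Proof. by case. Qed.

Definition linf (f : A -> A) :=
  (forall x y, f (x + y) = f x + f y) /\ (forall (k : K) x, f (k *: x) = k *: f x).

Lemma linf0 f : linf f -> f 0 = 0.
Proof. by case=> _ HZ; have := HZ 0 0; rewrite !scale0r. Qed.

Lemma linfB f : linf f -> forall x y, f (x - y) = f x - f y.
Proof. by case=> HD HZ x y; rewrite HD -scaleN1r HZ scaleN1r. Qed.

Lemma lin_mulr x : linf (mul x).
Proof. by case: Halg => _ _ HD _ HZ; split. Qed.

Lemma lin_mull y : linf (mul^~ y).
Proof. by case: Halg => _ HD _ HZ _; split => *; rewrite ?HD ?HZ. Qed.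

Lemma lin_comp f g : linf f -> linf g -> linf (fun x => f (g x)).
Proof. by case=> Hf1 Hf2 [Hg1 Hg2]; split => *; rewrite ?Hg1 ?Hg2 ?Hf1 ?Hf2. Qed.

Lemma lin_sub_pre f P : linf f -> submod P -> submod (fun x => P (f x)).
Proof.
move=> Hf [H0 HD HZ]; case: (Hf) => Hf1 Hf2; split.
- by rewrite linf0.
- by move=> x y Px Py; rewrite Hf1; apply: HD.
- by move=> k x Px; rewrite Hf2; apply: HZ.
Qed.

Lemma gen_subalgP U : is_subalg mul (gen_subalg mul U).
Proof.
split.
- by move=> S [] .
- by move=> x y Hx Hy S HS HU; case: (HS) => _ HD _ _; apply: HD; [apply: Hx|apply: Hy].
- by move=> k x Hx S HS HU; case: (HS) => _ _ HZ _; apply: HZ; apply: Hx.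
- by move=> x y Hx Hy S HS HU; case: (HS) => _ _ _ HM; apply: HM; [apply: Hx|apply: Hy].
Qed.

Lemma gen_base U u : u \in U -> gen_subalg mul U u.
Proof. by move=> Hu S _ HU; apply: HU. Qed.

End Help.

Theorem theorem1p5 (K : comPzRingType) (A : lmodType K) (mul : A -> A -> A)
  (B : A -> Prop) :
  is_Kalgebra mul -> is_subalg mul B -> quot_fin_pres B ->
  (fg_alg mul <-> fg_subalg mul B).
Proof.
move=> Halg HB [n [a [Hdec [m [r [Hr Hrel]]]]]].
have HBm := subalg_submod HB.
split; last first.
  move=> [UB [HUB HgenB]]; exists (UB ++ map a (enum 'I_n)); split => // x; split => // _.
  move=> S HS HU.
  have HSm := subalg_submod HS.
  have [c Hc] := Hdec x.
  have -> : x = (x - \sum_(i < n) c i *: a i) + \sum_(i < n) c i *: a i by rewrite subrK.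
  case: (HSm) => _ HD _; apply: HD.
    apply: ((HgenB _).2 Hc) => // u Hu; apply: HU; by rewrite mem_cat Hu.
  apply: submod_sum => // i; apply: HU; by rewrite mem_cat map_f ?orbT ?mem_enum.
move=> [X [_ HX]].
pose gam (x : A) : 'I_n -> K := proj1_sig (constructive_indefinite_description _ (Hdec x)).
have Hgam x : B (x - \sum_(i < n) gam x i *: a i).
  by rewrite /gam; case: constructive_indefinite_description.
pose beta x := x - \sum_(i < n) gam x i *: a i.
pose U := X ++ map a (enum 'I_n).
have HaU i : a i \in U by rewrite mem_cat map_f ?orbT ?mem_enum.
pose s j := \sum_(i < n) r j i *: a i.
pose P2 := [seq mul u1 u2 | u1 <- U, u2 <- U].
pose P3 := [seq mul w u3 | w <- P2, u3 <- U].
pose G := map beta U ++ map beta P2 ++ map beta P3 ++ map s (enum 'I_m).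
pose C := gen_subalg mul G.
have HC := gen_subalgP mul G.
have HCm := subalg_submod HC.
have HGB : forall g, g \in G -> B g.
  move=> g; rewrite !mem_cat => /or4P [] /mapP [y _ ->]; [exact: (Hgam)|exact: (Hgam)|exact: (Hgam)|exact: (Hr y)].
have HCB : forall x, C x -> B x by move=> x Hx; apply: Hx => //.
pose inV x := exists k : 'I_n -> K, x = \sum_(i < n) k i *: a i.
have inV_ind : forall P, submod P -> (forall i, P (a i)) -> forall x, inV x -> P x.
  by move=> P HP Ha x [k ->]; apply: submod_sum.
pose N x := exists c, C c /\ inV (x - c).
have HNm : submod N.
  split.
  - exists 0; split; first by case: (HC).
    by exists (fun _ => 0); rewrite subr0 big1 // => i _; rewrite scale0r.
  - move=> x y [c [Hc [k Hk]]] [c' [Hc' [k' Hk']]]; exists (c + c'); split.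
      by case: (HCm) => _ HD _; apply: HD.
    exists (fun i => k i + k' i).
    rewrite opprD addrACA Hk Hk' -big_split /=; apply: eq_bigr => i _; by rewrite scalerDl.
  - move=> k0 x [c [Hc [k Hk]]]; exists (k0 *: c); split.
      by case: (HCm) => _ _ HZ; apply: HZ.
    exists (fun i => k0 * k i); rewrite -scalerBr Hk scaler_sumr; apply: eq_bigr => i _.
    by rewrite scalerA.
have NC : forall c, C c -> N c.
  move=> c Hc; exists c; split => //; exists (fun _ => 0); rewrite subrr big1 // => i _.
  by rewrite scale0r.
have Na : forall i, N (a i).
  move=> i; exists 0; split; first by case: (HC).
  exists (fun j => (j == i)%:R); rewrite subr0 (bigD1 i) //= eqxx scale1r big1 ?addr0 //.
  by move=> j /negbTE ->; rewrite scale0r.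
have NV : forall x, inV x -> N x by apply: inV_ind.
have linV : forall f, linf f -> (forall i, N (f (a i))) -> forall v, inV v -> N (f v).
  move=> f Hf Ha; apply: inV_ind => //; exact: lin_sub_pre.
have Hdecomp : forall w, w = beta w + \sum_(i < n) gam w i *: a i by move=> w; rewrite subrK.
have HinVs : forall w, inV (\sum_(i < n) gam w i *: a i) by move=> w; exists (gam w).
have NofG : forall w, beta w \in G -> N w.
  move=> w Hw; exists (beta w); split; first exact: (gen_base).
  by exists (gam w); rewrite /beta opprB addrC subrK.
have Hassoc : forall x y z, mul x (mul y z) = mul (mul x y) z by case: Halg.
have N1 : forall u, u \in U -> N u.
  by move=> u Hu; apply: (NofG); rewrite !mem_cat; apply/or4P; apply: Or41; apply: map_f.
have G2 : forall u1 u2, u1 \in U -> u2 \in U -> beta (mul u1 u2) \in G.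
  move=> u1 u2 H1 H2; rewrite !mem_cat; apply/or4P; apply: Or42.
  by apply: map_f; exact: allpairs_f.
have N2 : forall u1 u2, u1 \in U -> u2 \in U -> N (mul u1 u2).
  move=> u1 u2 H1 H2; apply: (NofG); rewrite !mem_cat; apply/or4P; apply: Or42.
  by apply: map_f; exact: allpairs_f.
have N3 : forall u1 u2 u3, u1 \in U -> u2 \in U -> u3 \in U -> N (mul (mul u1 u2) u3).
  move=> u1 u2 u3 H1 H2 H3; apply: (NofG); rewrite !mem_cat; apply/or4P; apply: Or43.
  by apply: map_f; apply: allpairs_f => //; apply: allpairs_f.
have NB := submod_sub HNm.
have ND : forall x y, N x -> N y -> N (x + y) by case: (HNm).
have betaL : forall w y, mul (beta w) y = mul w y - mul (\sum_(i < n) gam w i *: a i) y.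
  by move=> w y; rewrite /beta (linfB (lin_mull Halg y)).
have betaR : forall w y, mul y (beta w) = mul y w - mul y (\sum_(i < n) gam w i *: a i).
  by move=> w y; rewrite /beta (linfB (lin_mulr Halg y)).
pose E c := C c /\ (forall u, u \in U -> N (mul u c) /\ N (mul c u)).
have HE : is_subalg mul E.
  split.
  - split; first by case: (HC).
    move=> u _; rewrite (linf0 (lin_mulr Halg u)) (linf0 (lin_mull Halg u)).
    by case: (HNm).
  - move=> x y [Cx Ex] [Cy Ey]; split; first by case: (HCm) => _ HD _; apply: HD.
    move=> u Hu; have [E1 E2] := Ex u Hu; have [E3 E4] := Ey u Hu.
    by case: (lin_mulr Halg u) => -> _; case: (lin_mull Halg u) => -> _; split; apply: (ND).
  - move=> k x [Cx Ex]; split; first by case: (HCm) => _ _ HZ; apply: HZ.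
    move=> u Hu; have [E1 E2] := Ex u Hu.
    by case: (lin_mulr Halg u) => _ ->; case: (lin_mull Halg u) => _ ->; split; case: (HNm) => _ _; apply.
  - move=> x y [Cx Ex] [Cy Ey]; split; first by case: (HC) => _ _ _; apply.
    move=> u Hu; split.
      rewrite Hassoc; have [c [Hc HV]] := (Ex u Hu).1.
      rewrite -(subrK c (mul u x)) (lin_mull Halg y).1.
      apply: (ND); last by apply: (NC); case: (HC) => _ _ _; apply.
      by apply: (linV _ (lin_mull Halg y)) => // i; exact: (Ey _ (HaU i)).1.
    rewrite -Hassoc; have [c [Hc HV]] := (Ey u Hu).2.
    rewrite -(subrK c (mul y u)) (lin_mulr Halg x).1.
    apply: (ND); last by apply: (NC); case: (HC) => _ _ _; apply.
    by apply: (linV _ (lin_mulr Halg x)) => // i; exact: (Ex _ (HaU i)).2.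
have HGE : forall g, g \in G -> E g.
  move=> g Hg; split; first exact: (gen_base).
  move=> u Hu.
  move: Hg; rewrite !mem_cat => /or4P [] /mapP [w Hw ->].
  - rewrite betaL betaR; split; apply: (NB).
    + exact: (N2).
    + by apply: (linV _ (lin_mulr Halg u)) => // i; apply: (N2).
    + exact: (N2).
    + by apply: (linV _ (lin_mull Halg u)) => // i; apply: (N2).
  - move/allpairsP: Hw => [[u1 u2] [/= H1 H2 ->]].
    rewrite betaL betaR; split; apply: (NB).
    + by rewrite Hassoc; apply: (N3).
    + by apply: (linV _ (lin_mulr Halg u)) => // i; apply: (N2).
    + exact: (N3).
    + by apply: (linV _ (lin_mull Halg u)) => // i; apply: (N2).
  - move/allpairsP: Hw => [[w' u3] [/= /allpairsP [[u1 u2] [/= H1 H2 ->]] H3 ->]].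
    rewrite betaL betaR; split; apply: (NB).
    +
      rewrite !Hassoc.
      rewrite (Hdecomp (mul u u1)) (lin_mull Halg u2).1 (lin_mull Halg u3).1.
      apply: (ND); last first.
        apply: (linV (fun x => mul (mul x u2) u3)).
        * exact: lin_comp (lin_mull Halg u3) (lin_mull Halg u2).
        * by move=> i; apply: (N3).
        * exact: (HinVs).
      rewrite -Hassoc (Hdecomp (mul u2 u3)) (lin_mulr Halg _).1.
      apply: (ND).
        apply: (NC); case: (HC) => _ _ _; apply; apply: (gen_base); exact: G2.
      apply: (linV _ (lin_mulr Halg _)); last exact: (HinVs).
      move=> i; rewrite betaL; apply: (NB); first exact: (N3).
      by apply: (linV _ (lin_mull Halg _)) => // j; apply: (N2).
    + by apply: (linV _ (lin_mulr Halg u)) => // i; apply: (N2).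
    + rewrite (Hdecomp (mul u1 u2)) (lin_mull Halg u3).1 (lin_mull Halg u).1.
      apply: (ND); last first.
        apply: (linV (fun x => mul (mul x u3) u)).
        * exact: lin_comp (lin_mull Halg u) (lin_mull Halg u3).
        * by move=> i; apply: (N3).
        * exact: (HinVs).
      rewrite -Hassoc (Hdecomp (mul u3 u)) (lin_mulr Halg _).1.
      apply: (ND).
        apply: (NC); case: (HC) => _ _ _; apply; apply: (gen_base); exact: G2.
      apply: (linV _ (lin_mulr Halg _)); last exact: (HinVs).
      move=> i; rewrite betaL; apply: (NB); first exact: (N3).
      by apply: (linV _ (lin_mull Halg _)) => // j; apply: (N2).
    + by apply: (linV _ (lin_mull Halg u)) => // i; apply: (N2).
  - split.
    + by apply: (linV _ (lin_mulr Halg u)) => //; [move=> i; apply: (N2) | exists (r w)].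
    + by apply: (linV _ (lin_mull Halg u)) => //; [move=> i; apply: (N2) | exists (r w)].
have CE : forall c, C c -> E c by move=> c Hc; apply: Hc.
have HNalg : is_subalg mul N.
  case: (HNm) => H0 HD HZ; split => //.
  move=> x y [c [Hc Hx]] [c' [Hc' Hy]].
  rewrite -(subrK c x) (lin_mull Halg y).1; apply: (ND).
    apply: (linV _ (lin_mull Halg y)) => // i.
    rewrite -(subrK c' y) (lin_mulr Halg _).1; apply: (ND).
      apply: (linV _ (lin_mulr Halg _)) => // j; exact: (N2).
    exact: ((CE _ Hc').2 _ (HaU i)).1.
  rewrite -(subrK c' y) (lin_mulr Halg _).1; apply: (ND).
    apply: (linV _ (lin_mulr Halg _)) => // j; exact: ((CE _ Hc).2 _ (HaU j)).2.
  by apply: (NC); case: (HC) => _ _ _; apply.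
have Nall : forall x, N x.
  move=> x; have := (HX x).2 I; apply => // u Hu; apply: (N1); by rewrite mem_cat Hu.
exists G; split; first exact: (HGB).
move=> x; split; first exact: (HCB).
move=> Bx; have [c [Hc [k Hk]]] := Nall x.
have Bxc : B (x - c) by apply: (submod_sub HBm) => //; exact: (HCB).
rewrite Hk in Bxc; have [d Hd] := Hrel k Bxc.
rewrite -(subrK c x); case: (HCm) => _ HDc _; apply: HDc => //.
have -> : x - c = \sum_(j < m) d j *: s j.
  rewrite Hk (eq_bigr (fun i => \sum_(j < m) (d j * r j i) *: a i)); last first.
    by move=> i _; rewrite Hd scaler_suml.
  rewrite exchange_big /=; apply: eq_bigr => j _; rewrite /s scaler_sumr.
  by apply: eq_bigr => i _; rewrite scalerA.
apply: submod_sum => // j; apply: (gen_base); rewrite !mem_cat; apply/or4P; apply: Or44.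
by apply: map_f; rewrite mem_enum.
Qed.
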